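(* Let $\Omega\subset\mathbb{R}^n$ ($n\ge1$) be a bounded domain, $T>0$, $\delta\in(0,1)\cup(1,2)$, $\bar Q:=\bar\Omega\times[0,T]$ and $Q:=\Omega\times(0,T]$. Let $u$ be a classical solution of the initial-boundary value problem described in the context. Assume that $\partial^{\bar\delta}u(x,t)/\partial t^{\bar\delta}$ is continuous on $\bar Q$. Then \[ \lim_{t\to0^+} D_t^\delta u(x,t)=0\quad\text{for each } x\in\Omega . \]
   Context: Set $\bar\delta=1$ if $0<\delta<1$ and $\bar\delta=2$ if $1<\delta<2$. The Caputo fractional derivative is \[ D_t^\delta g(x,t):=\frac{1}{\Gamma(\bar\delta-\delta)}\int_0^t (t-s)^{\bar\delta-\delta-1}\,\frac{\partial^{\bar\delta}g(x,s)}{\partial s^{\bar\delta}}\,ds,\qquad x\in\Omega,\ 0<t\le T. \] The problem is: $D_t^\delta u-\sum_{i,j=1}^n p_{ij}(x,t)\,\partial^2u/\partial x_i\partial x_j+\sum_{i=1}^n q_i(x,t)\,\partial u/\partial x_i+r(x,t)u=f(x,t)$ for $(x,t)\in Q$; $u(x,t)=\psi(x,t)$ for $(x,t)\in\partial\Omega\times(0,T]$; $u(x,0)=\phi_0(x)$ for $x\in\bar\Omega$; and, only when $1<\delta<2$, $u_t(x,0)=\phi_1(x)$ for $x\in\Omega$. The spatial operator $w\mapsto\sum p_{ij}\partial^2w/\partial x_i\partial x_j+\sum q_i\partial w/\partial x_i+rw$ is uniformly elliptic on $Q$; $p_{ij},q_i,r,\psi,\phi_0,\phi_1$ are continuous on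 the closures of their domains; and $\phi_0(x)=\psi(x,0)$ for all $x\in\partial\Omega$. A classical solution is a function $u$ continuous on $\bar Q$ for which $D_t^\delta u$, $\partial u/\partial x_i$, $\partial^2u/\partial x_i\partial x_j$ exist at every point of $Q$ and the equation and the initial and boundary conditions hold pointwise. *)

(* Defs.v *)
From HB Require Import structures.
From mathcomp Require Import all_boot all_order all_algebra.
From mathcomp Require Import all_classical all_reals all_analysis.
Set Implicit Arguments. Unset Strict Implicit. Unset Printing Implicit Defensive.
Import Order.TTheory GRing.Theory Num.Theory.
Import numFieldNormedType.Exports.
Local Open Scope classical_set_scope.
Local Open Scope ring_scope.

Section Defs.
Variable R : realType.

Definition Gamma (z : R) : R :=
  Rintegral lebesgue_measure `[0, +oo[%classic (fun x => x `^ (z - 1) * expR (- x)).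

Definition dbar (d : R) : nat := if d < 1 then 1%N else 2%N.

Definition tder (k : nat) (n : nat) (u : 'rV[R]_n -> R -> R) (x : 'rV[R]_n) (s : R) : R :=
  derive1n k (u x) s.

Definition tder_exists (k : nat) (n : nat) (u : 'rV[R]_n -> R -> R) (x : 'rV[R]_n) (s : R) : Prop :=
  if k == 1%N then derivable (u x) s 1
  else (\forall s' \near s, derivable (u x) s' 1) /\ derivable (derive1 (u x)) s 1.

Definition caputo (d : R) (n : nat) (u : 'rV[R]_n -> R -> R) (x : 'rV[R]_n) (t : R) : R :=
  (Gamma ((dbar d)%:R - d))^-1 *
  Rintegral lebesgue_measure `[0, t]%classic
    (fun s => (t - s) `^ ((dbar d)%:R - d - 1) * tder (dbar d) u x s).

Definition caputo_exists (d : R) (n : nat) (u : 'rV[R]_n -> R -> R) (x : 'rV[R]_n) (t : R) : Prop :=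
  (forall s, 0 < s < t -> tder_exists (dbar d) u x s) /\
  lebesgue_measure.-integrable `[0, t]%classic
    (fun s => ((t - s) `^ ((dbar d)%:R - d - 1) * tder (dbar d) u x s)%:E).

Definition evec (n : nat) (i : 'I_n) : 'rV[R]_n := delta_mx 0 i.

Definition pd (n : nat) (i : 'I_n) (f : 'rV[R]_n -> R) (x : 'rV[R]_n) : R :=
  'D_(evec i) f x.

End Defs.

Arguments Gamma {R}.
Arguments dbar {R}.
Arguments tder {R}.
Arguments tder_exists {R}.
Arguments caputo {R}.
Arguments caputo_exists {R}.
Arguments evec {R n}.
Arguments pd {R n}.

(* Main.v *)
Require Import Defs.
From HB Require Import structures.
From mathcomp Require Import all_boot all_order all_algebra.
From mathcomp Require Import all_classical all_reals all_analysis.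
From mathcomp Require Import measurable_realfun.
From mathcomp Require Import ring lra.
Import Order.TTheory GRing.Theory Num.Theory.
Import numFieldNormedType.Exports.
Local Open Scope classical_set_scope.
Local Open Scope ring_scope.

Lemma der_tpow (R : realType) (t b s : R) : s < t ->
  is_derive s 1 (fun s => (t - s) `^ b) (- (b * (t - s) `^ (b - 1))).
Proof.
move=> st.
have h1 : is_derive s 1 (fun s => t - s) (-1).
  have := is_deriveB (is_derive_cst t s 1) (is_derive_id s 1).
  by rewrite sub0r.
have h2 : is_derive (t - s) 1 ((@powR R) ^~ b) (b * (t - s) `^ (b - 1)).
  by apply: is_derive1_powR; rewrite subr_gt0.
have := is_derive1_comp (f := (@powR R) ^~ b) (g := fun s => t - s) h2 h1.
by rewrite mulrN1.
Qed.
Arguments der_tpow {R t} b {s}.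

Lemma kernel_le (R : realType) (a t : R) : 0 < a -> 0 < t ->
  (\int[lebesgue_measure]_(s in `]0%R, t%R[) ((t - s) `^ (a - 1))%:E
     <= (t `^ a / a)%:E)%E.
Proof.
move=> a0 t0.
pose k := fun s : R => (t - s) `^ (a - 1).
pose F := fun s : R => - a^-1 * (t - s) `^ a.
have mk : measurable_fun [set: R] (EFin \o k).
  apply/(measurable_EFinP [set: R] k).
  have h1 : measurable_fun [set: R] (fun s : R => t - s) by exact: measurable_funB.
  have h2 := @measurable_powR R (a - 1).
  have := measurableT_comp h2 h1.
  exact.
have hF s : s < t -> is_derive s 1 F (k s).
  move=> st.
  have := is_deriveZ (- a^-1) (der_tpow a st).
  have -> : F = (- a^-1) \*: (fun s0 => (t - s0) `^ a) by [].
  move=> h; apply: is_derive_eq h _.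
  rewrite /k -[_ *: _]/(_ * _); field.
  by rewrite gt_eqF.
pose c := fun m : nat => t - t / m.+2%:R.
have cpos m : 0 < c m.
  rewrite /c subr_gt0 ltr_pdivrMr ?ltr0n // ltr_pMr // ltr1n //.
have clt m : c m < t.
  by rewrite /c ltrBlDl ltrDr divr_gt0 // ltr0n.
pose Fs := fun m : nat => `[0, c m]%classic.
have hFs m : (\int[lebesgue_measure]_(s in Fs m) (k s)%:E <= (t `^ a / a)%:E)%E.
  rewrite /Fs (@continuous_FTC2 _ k F 0 (c m)) //.
  - rewrite -EFinB lee_fin /F subr0.
    have : 0 <= a^-1 * (t - c m) `^ a by rewrite mulr_ge0 ?invr_ge0 ?powR_ge0 // ltW.

    rewrite [t `^ a / a]mulrC; lra.
  - apply: derivable_within_continuous => s; rewrite in_itv /= => /andP[_ sc].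
    exact: (@ex_derive _ _ _ _ _ _ _ (der_tpow (a - 1) (le_lt_trans sc (clt m)))).
  - split.
    + move=> s; rewrite in_itv /= => /andP[_ sc].
      exact: (@ex_derive _ _ _ _ _ _ _ (hF _ (lt_trans sc (clt m)))).
    + apply: cvg_at_right_filter; apply: differentiable_continuous.
      exact/derivable1_diffP/(@ex_derive _ _ _ _ _ _ _ (hF _ t0)).
    + apply: cvg_at_left_filter; apply: differentiable_continuous.
      exact/derivable1_diffP/(@ex_derive _ _ _ _ _ _ _ (hF _ (clt m))).
  - move=> s; rewrite in_itv /= => /andP[_ sc].
    by rewrite derive1E (@derive_val _ _ _ _ _ _ _ (hF _ (lt_trans sc (clt m)))).
have nd : nondecreasing_seq Fs.
  move=> m n mn; rewrite subsetEset => s; rewrite /Fs /= !in_itv /= => /andP[s0 sc].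
  rewrite s0 (le_trans sc) //.
  rewrite /c; apply: lerB => //; rewrite ler_pM2l // lef_pV2 ?posrE ?ltr0n // ler_nat.
  by rewrite !ltnS.
have mFs m : measurable (Fs m) by exact: measurable_itv.
have mf m : measurable_fun (Fs m) (EFin \o k).
  exact: measurable_funS measurableT (@subsetT _ _) mk.
have f0 m s : Fs m s -> (0 <= (EFin \o k) s)%E.
  by move=> _; rewrite lee_fin powR_ge0.
have cv := @ge0_nondecreasing_set_cvg_integral _ (measurableTypeR R) R Fs (EFin \o k) (@lebesgue_measure R) nd mFs mf f0.
change (\int[lebesgue_measure]_(s in `]0%R, t%R[) (EFin \o k) s <= (t `^ a / a)%:E)%E.
apply: (@le_trans _ _ (\int[lebesgue_measure]_(s in \bigcup_m Fs m) (EFin \o k) s)%E).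
  apply: ge0_subset_integral => //.
  - exact: bigcupT_measurable.
  - exact: measurable_funS measurableT (@subsetT _ _) mk.
  - by move=> s _; rewrite lee_fin powR_ge0.
  - move=> s /=; rewrite in_itv /= => /andP[s0 st].
    have ts : 0 < t - s by rewrite subr_gt0.
    exists (Num.truncn (t / (t - s))) => //=.
    set m := Num.truncn (t / (t - s)).
    have h := truncnS_gt (t / (t - s)).
    rewrite -/m ltr_pdivrMr // in h.
    have : t / m.+2%:R <= t - s.
      rewrite ler_pdivrMr ?ltr0n // -[m.+2%:R]natr1.
      nra.
    rewrite /Fs /= in_itv /= (ltW s0) /=.
    rewrite /c; move: (t / m.+2%:R) => y; lra.
rewrite -(cvg_lim _ cv) //.
apply: lime_le.
  by apply/cvg_ex; eexists; exact: cv.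
by apply: nearW => m; exact: hFs.
Qed.

Lemma int_bound (R : realType) (a t M : R) (h : R -> R) : 0 < a -> 0 < t ->
  lebesgue_measure.-integrable `[0, t]%classic
    (fun s => ((t - s) `^ (a - 1) * h s)%:E) ->
  (forall s, 0 < s < t -> `|h s| <= M) ->
  `|Rintegral lebesgue_measure `[0, t]%classic (fun s => (t - s) `^ (a - 1) * h s)|
    <= M * (t `^ a / a).
Proof.
move=> a0 t0 hi hM.
have M0 : 0 <= M.
  apply: le_trans (hM (t / 2) _) => //.
  apply/andP; split; first by rewrite divr_gt0.
  by rewrite ltr_pdivrMr // ltr_pMr // ltr1n.
pose k := fun s : R => (t - s) `^ (a - 1).
have mk : measurable_fun [set: R] k.
  have h1 : measurable_fun [set: R] (fun s : R => t - s) by exact: measurable_funB.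
  have h2 := @measurable_powR R (a - 1).
  have := measurableT_comp h2 h1.
  exact.
have mf := (integrableP _ _ _ hi).1.
have fI : (\int[lebesgue_measure]_(s in `[0%R, t%R]) ((t - s) `^ (a - 1) * h s)%:E)%E \is a fin_num.
  by apply: integrable_fin_num => //.
have mfa : measurable_fun `[0, t]%classic
    (fun s => `|((t - s) `^ (a - 1) * h s)%:E|%E).
  exact: measurableT_comp mf.
have HI : (`|\int[lebesgue_measure]_(s in `[0%R, t%R]) ((t - s) `^ (a - 1) * h s)%:E|
     <= (M * (t `^ a / a))%:E)%E.
  apply: le_trans; first by apply: le_abse_integral.
  rewrite -integral_itv_obnd_cbnd; last first.
    apply: measurable_funS mfa => //.
    by move=> s /=; rewrite !in_itv /= => /andP[/ltW -> ->].
  rewrite -(integral_itv_bndo_bndc (a:=BRight 0%R) (r:=t)); last first.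
    apply: measurable_funS mfa => //.
    by move=> s /=; rewrite !in_itv /= => /andP[/ltW -> /ltW ->].
  apply: (@le_trans _ _ (\int[lebesgue_measure]_(s in `]0%R, t%R[) ((M * k s)%:E))%E).
    apply: ge0_le_integral => //.
    - apply: measurable_funS mfa => //.
      by move=> s /=; rewrite !in_itv /= => /andP[/ltW -> /ltW ->].
    - apply: measurable_funS (measurableT) (@subsetT _ _) _.
      apply/measurable_EFinP.
      have := measurable_funM (measurable_cst M) mk.
      exact.
    - move=> s; rewrite /= in_itv /= => hs.
      rewrite lee_fin normrM [`|(t - s) `^ _|]ger0_norm ?powR_ge0 // mulrC /k.
      by apply: ler_wpM2r; [exact: powR_ge0 | exact: hM].
  under eq_integral do rewrite EFinM.
  rewrite ge0_integralZl_EFin //.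
  - rewrite EFinM; apply: lee_wpmul2l; first by rewrite lee_fin.
    exact: kernel_le.
  - by move=> s _; rewrite lee_fin powR_ge0.
  - apply: measurable_funS (measurableT) (@subsetT _ _) _.
    exact/measurable_EFinP.
move: fI HI; rewrite /Rintegral.
case: (\int[lebesgue_measure]_(s in `[0%R, t%R]) ((t - s) `^ (a - 1) * h s)%:E)%E => //= r _.
Qed.

Lemma near_bound (R : realType) (n : nat) (x : 'rV[R]_n) (g : 'rV[R]_n * R -> R)
  (Qbar : set ('rV[R]_n * R)) :
  {within Qbar, continuous g} -> Qbar (x, 0) ->
  exists2 e : R, 0 < e & forall s, `|s| < e -> Qbar (x, s) -> `|g (x, 0) - g (x, s)| < 1.
Proof.
move=> gc Qx0.
have cg := (subspace_continuousP _ _).1 gc (x, 0) Qx0.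
have H := (cvgrPdist_lt _ _).1 cg 1 ltr01.
have H1 : \forall z \near (x, 0), Qbar z -> `|g (x, 0) - g z| < 1 by exact: H.
case: H1 => [[A B] /= [nA nB] AB].
have H2 : nbhs (0:R) (fun s => Qbar (x, s) -> `|g (x, 0) - g (x, s)| < 1).
  apply: filterS nB => s Bs; apply: AB; split => //=.
  exact: nbhs_singleton nA.
have [e e0 He] := (nbhs_ballP _ _).1 H2.
exists e => // s hs.
apply: He.
by rewrite /ball /= sub0r normrN.
Qed.
Arguments near_bound {R n x g Qbar}.
Arguments int_bound {R a t M h}.

Theorem corollary2p2 (R : realType) (n : nat) (Omega : set 'rV[R]_n) (T d : R)
  (p : 'I_n -> 'I_n -> 'rV[R]_n -> R -> R) (q : 'I_n -> 'rV[R]_n -> R -> R)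
  (r f psi : 'rV[R]_n -> R -> R) (phi0 phi1 : 'rV[R]_n -> R)
  (u : 'rV[R]_n -> R -> R) :
  (0 < n)%N ->
  (* Omega is a bounded domain *)
  open Omega -> connected Omega -> Omega !=set0 ->
  (exists M : R, forall x, Omega x -> `|x| <= M) ->
  0 < T ->
  0 < d < 2 -> d != 1 ->
  let Qbar := [set z : 'rV[R]_n * R | closure Omega z.1 /\ 0 <= z.2 <= T] in
  let Q := [set z : 'rV[R]_n * R | Omega z.1 /\ 0 < z.2 <= T] in
  let bdry := closure Omega `\` Omega in
  (* uniform ellipticity on Q *)
  (exists lam : R, 0 < lam /\ forall x t, Q (x, t) -> forall xi : 'rV[R]_n,
      \sum_(i < n) \sum_(j < n) p i j x t * xi 0 i * xi 0 j
        >= lam * \sum_(i < n) xi 0 i ^+ 2) ->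
  (* continuity of the data on the closures of their domains *)
  (forall i j, {within Qbar, continuous (fun z => p i j z.1 z.2)}) ->
  (forall i, {within Qbar, continuous (fun z => q i z.1 z.2)}) ->
  {within Qbar, continuous (fun z => r z.1 z.2)} ->
  {within [set z | bdry z.1 /\ 0 <= z.2 <= T], continuous (fun z => psi z.1 z.2)} ->
  {within closure Omega, continuous phi0} ->
  (1 < d -> {within closure Omega, continuous phi1}) ->
  (forall x, bdry x -> phi0 x = psi x 0) ->
  (* u is a classical solution *)
  {within Qbar, continuous (fun z => u z.1 z.2)} ->
  (forall x t, Q (x, t) ->
     caputo_exists d n u x t /\
     (forall i, derivable (fun y => u y t) x (evec i)) /\
     (forall i j, derivable (pd j (fun y => u y t)) x (evec i))) ->
  (forall x t, Q (x, t) ->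
     caputo d n u x t
     - \sum_(i < n) \sum_(j < n) p i j x t * pd i (pd j (fun y => u y t)) x
     + \sum_(i < n) q i x t * pd i (fun y => u y t) x
     + r x t * u x t = f x t) ->
  (forall x t, bdry x -> 0 < t <= T -> u x t = psi x t) ->
  (forall x, closure Omega x -> u x 0 = phi0 x) ->
  (1 < d -> forall x, Omega x ->
     (fun h => h^-1 * (u x h - u x 0)) @ (0 : R)^'+ --> phi1 x) ->
  (* extra hypothesis: the dbar-th time derivative of u is continuous on Qbar,
     i.e. it exists on closure(Omega) x (0,T) and extends continuously to Qbar *)
  (exists g : 'rV[R]_n * R -> R,
     {within Qbar, continuous g} /\
     forall x t, closure Omega x -> 0 < t < T ->
       tder_exists (dbar d) n u x t /\ tder (dbar d) n u x t = g (x, t)) ->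
  forall x, Omega x -> caputo d n u x t @[t --> (0 : R)^'+] --> 0.
Proof.
move=> n0 oO cO neO bO T0 /andP[d0 d2] dn1 Qbar Q bdry _ _ _ _ _ _ _ _ uc hsol _ _ _ _ [g [gc hg]] x Ox.
have ha : 0 < (dbar d)%:R - d.
  rewrite /dbar; case: ifPn => hd; rewrite subr_gt0 //.
set a := (dbar d)%:R - d.
have Qx0 : Qbar (x, 0).
  split => /=; first exact: subset_closure.
  by rewrite lexx ltW.
have [e e0 He] := near_bound gc Qx0.
set M := `|g (x, 0)| + 1.
set C := `|(Gamma a)^-1|.
set K := C * M / a.
have h0 : (K * t `^ a) @[t --> (0:R)^'+] --> 0.
  have := cvgM (cvg_cst K) (powR_cvg0 ha); rewrite mulr0; exact.
have h1 : ((- K) * t `^ a) @[t --> (0:R)^'+] --> 0.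
  have := cvgM (cvg_cst (- K)) (powR_cvg0 ha); rewrite mulr0; exact.
apply: (@squeeze_cvgr _ _ _ _ (fun t => (- K) * t `^ a) (fun t => K * t `^ a)); last 2 first.
- exact: h1.
- exact: h0.
near=> t.
have t0 : 0 < t by near: t; exact: nbhs_right_gt.
have te : t < e by near: t; exact: nbhs_right_lt.
have tT : t < T by near: t; exact: nbhs_right_lt.
rewrite mulNr -ler_norml.
have Qxt : Q (x, t) by split => //=; rewrite t0 ltW.
have [[_ hint] _] := hsol x t Qxt.
have hM : forall s, 0 < s < t -> `|tder (dbar d) n u x s| <= M.
  move=> s /andP[s0 st].
  have [_ ->] := hg x s (subset_closure Ox) ltac:(by rewrite s0 (lt_trans st tT)).
  have Qxs : Qbar (x, s) by split => /=; [exact: subset_closure | rewrite (ltW s0) ltW // (lt_trans st tT)].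
  have hs : `|s| < e by rewrite gtr0_norm // (lt_trans st te).
  have := He s hs Qxs.
  have := lerB_dist (g (x, s)) (g (x, 0)).
  rewrite distrC /M; lra.
have := int_bound ha t0 hint hM.
rewrite /caputo normrM -/a => hI.
apply: le_trans (ler_wpM2l (normr_ge0 _) hI) _.
rewrite -/C le_eqVlt; apply/orP; left; apply/eqP.
rewrite /K; field.
by rewrite gt_eqF.
Unshelve. all: end_near.
Qed.
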